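(* Let $(M,g)$ be a complete Riemannian manifold and let $V\in L^\infty_{\rm loc}(M)$ with $V\ge1$ a.e., $\operatorname{ess\,lim}_{d(p,p_0)\to\infty}V(p)=\infty$, satisfying the doubling condition. Then $$\lim_{\delta\to0}\frac{\int_M e^{-tV(x)}\,dx}{\int_M e^{-t(1-\delta)V(x)}\,dx}=1$$ uniformly in $t\in(0,1]$.
   Context: $d$ is the Riemannian distance, $p_0\in M$ fixed, $dx$ and $|\cdot|$ the Riemannian measure. $\operatorname{ess\,lim}V=\infty$ means: for every $L>0$ there is $R>0$ with $V(p)\ge L$ for a.e. $p$ with $d(p,p_0)\ge R$. Doubling condition: with $\sigma(\lambda)=|\{x:V(x)\le\lambda\}|$, there are $C_V,\lambda_0>0$ with $\sigma(2\lambda)\le C_V\sigma(\lambda)$ for all $\lambda\ge\lambda_0$. *)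

(* Defs.v *)
From HB Require Import structures.
From mathcomp Require Import all_boot all_order all_algebra.
From mathcomp Require Import all_classical all_reals all_analysis.
Set Implicit Arguments. Unset Strict Implicit. Unset Printing Implicit Defensive.
Import Order.TTheory GRing.Theory Num.Theory.
Local Open Scope classical_set_scope.
Local Open Scope ring_scope.

Definition sublevel_measure d (T : measurableType d) (R : realType)
  (mu : {measure set T -> \bar R}) (V : T -> R) (lam : R) : \bar R :=
  mu [set x | V x <= lam].

Definition partition_fn d (T : measurableType d) (R : realType)
  (mu : {measure set T -> \bar R}) (V : T -> R) (s : R) : \bar R :=
  (\int[mu]_x (expR (- (s * V x)))%:E)%E.

Definition doubling d (T : measurableType d) (R : realType)
  (mu : {measure set T -> \bar R}) (V : T -> R) : Prop :=
  exists CV lam0 : R, 0 < CV /\ 0 < lam0 /\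
    forall lam, lam0 <= lam ->
      (sublevel_measure mu V (2 * lam) <= CV%:E * sublevel_measure mu V lam)%E.

(* Main.v *)
Require Import Defs.
From HB Require Import structures.
From mathcomp Require Import all_boot all_order all_algebra.
From mathcomp Require Import all_classical all_reals all_analysis.
From mathcomp Require Import ring lra measurable_realfun.
Import Order.TTheory GRing.Theory Num.Theory.
Local Open Scope classical_set_scope.
Local Open Scope ring_scope.
Lemma pow2_ub {R : realType} (x : R) : exists k : nat, x <= 2 ^+ k.
Proof.
exists (Num.Def.trunc x).+1.
apply: (le_trans (ltW (truncnS_gt x))).
by rewrite -natrX ler_nat ltnW // ltn_expl.
Qed.

Lemma series_small (R : realType) (C1 Lam eta : R) : 1 <= C1 -> 1 <= Lam -> 0 < eta ->
  exists m : nat, forall n : nat,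
   expR (- (2 ^+ (n + m) * Lam)) * C1 ^+ (n + m).+2 <= eta / (2 ^ n.+1)%:R.
Proof.
move=> C11 Lam1 eta0.
have [p Cp] : exists p : nat, C1 <= p%:R.
  by exists (Num.Def.trunc C1).+1; exact: ltW (truncnS_gt C1).
have p2 : (p%:R : R) <= 2 ^+ p by rewrite -natrX ler_nat ltnW // ltn_expl.
have h4 : 4 * C1 <= 2 ^+ p.+2 by rewrite !exprS; lra.
set f : R := (p.+2)`!%:R.
have f0 : 0 < f by rewrite ltr0n fact_gt0.
have [k hk] := pow2_ub (f * C1 ^+ 2 / eta).
exists k.+1 => n.
set N := (n + k.+1)%N.
set a : R := 2 ^+ n.+1.
set b : R := 2 ^+ k.
have a1 : 1 <= a by apply: exprn_ege1; rewrite ler1n.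
have b1 : 1 <= b by apply: exprn_ege1; rewrite ler1n.
have eN : 2 ^+ N = a * b by rewrite /a /b -exprD /N addSnnS.
set c : R := C1 ^+ N.
have c0 : 0 < c by rewrite exprn_gt0 //; lra.
set x : R := 2 ^+ N * Lam.
have x0 : 0 <= x by rewrite /x mulr_ge0 // ?exprn_ge0 //; lra.
have E0 : 0 < expR x := expR_gt0 x.
have F1 : (a * b) ^+ 2 * c <= f * expR x.
  have := expR_ge1Dxn p.+1 x0; rewrite -/f => h.
  have h2 : (a * b) ^+ 2 * c <= x ^+ p.+2.
    apply: (@le_trans _ _ ((2 ^+ p.+2) ^+ N)).
      rewrite -eN exprAC.
      have -> : (2 ^+ 2 : R) = 4 by rewrite expr2; lra.
      rewrite /c -exprMn; apply: lerXn2r; rewrite ?nnegrE; try lra.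
    rewrite exprAC /x; apply: lerXn2r; rewrite ?nnegrE ?exprn_ge0 //.
    by rewrite -{1}[2 ^+ N]mulr1 ler_wpM2l // exprn_ge0.
  have : x ^+ p.+2 / f <= expR x by lra.
  rewrite ler_pdivrMr // => h3.
  by rewrite [f * _]mulrC; exact: le_trans h2 h3.
have F2 : f * C1 ^+ 2 <= eta * b by rewrite -ler_pdivrMl // mulrC.
rewrite natrX -/a expRN -/x exprSr exprSr -/c.
rewrite ler_pdivlMr ?exprn_gt0 // -[(expR x)^-1 * _ * a]mulrA (ler_pdivrMl _ _ E0).
rewrite -(ler_pM2r f0).
have h1 : a <= a * b by rewrite ler_peMr //; lra.
have h2 : a * b <= (a * b) * (a * b) by rewrite ler_peMr //; nra.
have -> : c * C1 * C1 * a * f = (a * c) * (f * C1 ^+ 2) by ring.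
apply: (le_trans (ler_wpM2l _ F2)); first by rewrite mulr_ge0 //; lra.
have -> : a * c * (eta * b) = (eta * c) * (a * b) by ring.
apply: (le_trans (ler_wpM2l _ h2)); first by rewrite mulr_ge0 //; lra.
have -> : eta * c * (a * b * (a * b)) = eta * ((a * b) ^+ 2 * c) by ring.
have -> : expR x * eta * f = eta * (f * expR x) by ring.
by rewrite ler_wpM2l //; lra.
Qed.
Lemma dyadic {R : realType} (z : R) : 1 < z ->
  exists n : nat, 2 ^+ n < z /\ z <= 2 ^+ n.+1.
Proof.
move=> z1; have [k zk] := pow2_ub z.
elim: k zk => [|k IH] zk.
  by move: (lt_le_trans z1 zk); rewrite expr0 ltxx.
case: (leP z (2 ^+ k)) => h; first exact: IH.
by exists k.
Qed.

Lemma term_le_series (R : realType) (u : (\bar R)^nat) k :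
  (forall n, (0 <= u n)%E) -> (u k <= \sum_(i <oo) u i)%E.
Proof.
move=> u0.
apply: (@le_trans _ _ (\sum_(0 <= i < k.+1) u i)%E); last first.
  by apply: nneseries_lim_ge => n _ _; exact: u0.
rewrite big_nat_recr //= -[X in (X <= _)%E]add0e.
by rewrite leeD2r // sume_ge0.
Qed.

Lemma tail_pt {R : realType} {t v dl A : R} : 0 < t -> 0 <= dl -> dl <= 1/2 ->
  0 < A -> A < t * v ->
  exists n : nat, v <= 2 ^+ n.+1 * A / t /\
    expR (- (t * (1 - dl) * v)) <= expR (- (2 ^+ n * A / 2)).
Proof.
move=> t0 d0 d1 A0 Av.
have tvA : 1 < t * v / A by rewrite ltr_pdivlMr // mul1r.
have [n [h1 h2]] := dyadic _ tvA.
exists n; split.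
  rewrite ler_pdivlMr // mulrC.
  by move: h2; rewrite ler_pdivrMr.
rewrite ler_expR lerN2.
move: h1; rewrite ltr_pdivlMr // => h1.
have tv0 : 0 < t * v by lra.
nra.
Qed.

Lemma pt_Z2 (R : realType) (t v dl A : R) (u : (\bar R)^nat) :
  0 < t -> 0 <= dl -> dl <= 1/2 -> 0 < A ->
  (forall n, (0 <= u n)%E) ->
  (forall n, (v <= 2 ^+ n.+1 * A / t)%R -> (expR (- (2 ^+ n * A / 2)))%:E <= u n)%E ->
  ((expR (- (t * (1 - dl) * v)))%:E <=
     (expR (dl * A))%:E * (expR (- (t * v)))%:E + \sum_(n <oo) u n)%E.
Proof.
move=> t0 d0 d1 A0 u0 hu.
case: (leP (t * v) A) => h.
  apply: le_trans (leeDl _ _); last exact: nneseries_ge0.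
  rewrite -EFinM lee_fin -expRD ler_expR; nra.
have [n [hn1 hn2]] := tail_pt t0 d0 d1 A0 h.
have y0 : (0 <= (expR (dl * A))%:E * (expR (- (t * v)))%:E)%E.
  by rewrite -EFinM lee_fin mulr_ge0 // expR_ge0.
apply: le_trans (leeDr _ y0).
apply: le_trans (@term_le_series _ u n u0).
by apply: le_trans (hu _ hn1); rewrite lee_fin.
Qed.

Lemma pt_Z1 (R : realType) (t v A i : R) (u : (\bar R)^nat) :
  0 < t -> 0 < A -> 1 <= v -> 0 <= i -> (v <= A / t -> i = 1) ->
  (forall n, (0 <= u n)%E) ->
  (forall n, (v <= 2 ^+ n.+1 * A / t)%R -> (expR (- (2 ^+ n * A / 2)))%:E <= u n)%E ->
  ((expR (- (t * v)))%:E <=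
     i%:E + \sum_(n <oo) u n)%E.
Proof.
move=> t0 A0 v1 i0 hi u0 hu.
case: (leP (t * v) A) => h.
  apply: le_trans (leeDl _ _); last exact: nneseries_ge0.
  rewrite hi; last by rewrite ler_pdivlMr // mulrC.
  rewrite lee_fin expR_le1; nra.
have d0 : (0:R) <= 0 by [].
have d1 : (0:R) <= 1/2 by lra.
have [n [hn1 hn2]] := tail_pt t0 d0 d1 A0 h.
have y0 : (0 <= i%:E)%E by rewrite lee_fin.
apply: le_trans (leeDr _ y0).
apply: le_trans (@term_le_series _ u n u0).
apply: le_trans (hu _ hn1); rewrite lee_fin.
by move: hn2; rewrite subr0 mulr1.
Qed.

Lemma mexp d (T : measurableType d) (R : realType) (V : T -> R)
  (V_meas : measurable_fun setT V) (s : R) :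
  measurable_fun setT (fun x : T => ((expR (- (s * V x)))%:E : \bar R)).
Proof.
apply/measurable_EFinP; apply: measurableT_comp => //.
apply: measurableT_comp => //; exact: measurable_funM.
Qed.

Lemma dbl_iter d (T : measurableType d) (R : realType)
  (mu : {measure set T -> \bar R}) (V : T -> R) (C lam0 : R) :
  0 < lam0 -> 0 <= C ->
  (forall lam, lam0 <= lam ->
      (sublevel_measure mu V (2 * lam) <= C%:E * sublevel_measure mu V lam)%E) ->
  forall (k : nat) lam, lam0 <= lam ->
  (sublevel_measure mu V (2 ^+ k * lam) <= (C ^+ k)%:E * sublevel_measure mu V lam)%E.
Proof.
move=> l0 C0 hd; elim=> [|k IH] lam hl.
  by rewrite expr0 mul1r mul1e.
have h1 : lam0 <= 2 ^+ k * lam.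
  apply: (le_trans hl); rewrite ler_peMl //; first lra.
  by apply: exprn_ege1; rewrite ler1n.
rewrite exprS -mulrA (le_trans (hd _ h1)) //.
rewrite exprS EFinM -muleA.
by apply: lee_wpmul2l; [rewrite lee_fin | exact: IH].
Qed.
Lemma mV d (T : measurableType d) (R : realType) (V : T -> R)
  (V_meas : measurable_fun setT V) (lam : R) : measurable [set x | V x <= lam].
Proof.
have := V_meas measurableT _ (@measurable_itv _ `]-oo, lam]).
rewrite setTI; congr measurable; apply/seteqP; split => x /=; by rewrite in_itv.
Qed.

Lemma sigma_fin d (T : measurableType d) (R : realType)
  (mu : {measure set T -> \bar R}) (dist : T -> T -> R) (p0 : T) (V : T -> R)
  (ball_meas : forall r : R, measurable [set x | dist x p0 < r])
  (ball_fin : forall r : R, (mu [set x | (dist x p0 < r)%R] < +oo)%E)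
  (V_meas : measurable_fun setT V)
  (V_esslim : forall L : R, 0 < L -> exists Rr : R, 0 < Rr /\
      {ae mu, forall x, (Rr <= dist x p0)%R -> (L <= V x)%R}) (lam : R) :
  (sublevel_measure mu V lam < +oo)%E.
Proof.
have L0 : 0 < `|lam| + 1 by rewrite ltr_wpDl.
have [Rr [_ hae]] := V_esslim _ L0.
have [N [mN muN sN]] := hae.
have sub : [set x | V x <= lam] `<=` [set x | dist x p0 < Rr] `|` N.
  move=> x /= hx; case: (ltP (dist x p0) Rr) => h; [by left|right].
  apply: sN => /= H; have := H h; have := ler_norm lam; lra.
rewrite /sublevel_measure.
apply: (le_lt_trans (le_measure _ _ _ sub)); rewrite ?inE.
- exact: mV.
- exact: measurableU.
apply: (le_lt_trans (measureU2 _ _ _)) => //.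
have muN0 : (mu N = 0)%E := muN.
have -> : (mu [set x | (dist x p0 < Rr)%R] + mu N = mu [set x | (dist x p0 < Rr)%R])%E.
  by rewrite muN0 adde0.
exact: ball_fin.
Qed.

Lemma sigma_pos d (T : measurableType d) (R : realType)
  (mu : {measure set T -> \bar R}) (V : T -> R) (C lam0 : R)
  (V_meas : measurable_fun setT V) (mu_pos : (0 < mu setT)%E) :
  0 < lam0 -> 0 <= C ->
  (forall lam, lam0 <= lam ->
      (sublevel_measure mu V (2 * lam) <= C%:E * sublevel_measure mu V lam)%E) ->
  forall lam, lam0 <= lam -> (0 < sublevel_measure mu V lam)%E.
Proof.
move=> l0 C0 hd lam hl.
rewrite lt0e measure_ge0 andbT; apply/negP => /eqP s0.
have z k : mu [set x | V x <= 2 ^+ k * lam] = 0%E.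
  apply/eqP; rewrite eq_le measure_ge0 andbT.
  by have := @dbl_iter _ _ _ mu V C lam0 l0 C0 hd k lam hl; rewrite s0 mule0; exact.
have : mu.-negligible (\bigcup_k [set x | V x <= 2 ^+ k * lam]).
  apply: negligible_bigcup => k; exists [set x | V x <= 2 ^+ k * lam]; split => //.
  exact: mV.
move=> [A [mA muA sA]].
have : (mu setT <= mu A)%E.
  apply: le_measure; rewrite ?inE //.
  move=> x _; apply: sA.
  have lam0' : 0 < lam by lra.
  have [k hk] := pow2_ub (V x / lam).
  exists k => //=; by rewrite -ler_pdivrMr.
by rewrite muA; move: mu_pos; case: (mu setT) => // r; rewrite !lee_fin lte_fin; lra.
Qed.
Theorem corollary3p1 (d : measure_display) (T : measurableType d) (R : realType)
  (mu : {measure set T -> \bar R}) (dist : T -> T -> R) (p0 : T) (V : T -> R)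
  (* metric axioms for the Riemannian distance *)
  (dist_ge0 : forall x y, 0 <= dist x y)
  (dist_eq0 : forall x y, dist x y = 0 <-> x = y)
  (dist_sym : forall x y, dist x y = dist y x)
  (dist_tri : forall x y z, dist x z <= dist x y + dist y z)
  (* properties of the Riemannian measure on a complete (nonempty) manifold:
     metric balls are measurable, of finite measure, and M has positive measure *)
  (ball_meas : forall r : R, measurable [set x | dist x p0 < r])
  (ball_fin : forall r : R, (mu [set x | (dist x p0 < r)%R] < +oo)%E)
  (mu_pos : (0 < mu setT)%E)
  (* hypotheses on V *)
  (V_meas : measurable_fun setT V)
  (V_Lloc : forall r : R, exists C : R,
      {ae mu, forall x, (dist x p0 < r)%R -> (`|V x| <= C)%R})
  (V_ge1 : {ae mu, forall x, (1 <= V x)%R})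
  (V_esslim : forall L : R, 0 < L -> exists Rr : R, 0 < Rr /\
      {ae mu, forall x, (Rr <= dist x p0)%R -> (L <= V x)%R})
  (V_doubling : doubling mu V) :
  forall eps : R, 0 < eps -> exists eta : R, 0 < eta /\
    forall delta t : R, 0 < delta -> delta < eta -> 0 < t -> t <= 1 ->
      `| fine (partition_fn mu V t) / fine (partition_fn mu V (t * (1 - delta))) - 1 |
        < eps.
Proof.
move=> eps eps0.
have [C [lam0 [C0 [l0 hd]]]] := V_doubling.
set C1 := Num.max C 1.
have C11 : 1 <= C1 by rewrite le_max lexx orbT.
have CC1 : C <= C1 by rewrite le_max lexx.
have hd1 : forall lam, lam0 <= lam ->
    (sublevel_measure mu V (2 * lam) <= C1%:E * sublevel_measure mu V lam)%E.
  move=> lam hl; apply: (le_trans (hd _ hl)).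
  by apply: lee_wpmul2r; [exact: measure_ge0 | rewrite lee_fin].
have C10 : 0 <= C1 by lra.
set Lam := Num.max lam0 1.
have Lam1 : 1 <= Lam by rewrite le_max lexx orbT.
have lamL : lam0 <= Lam by rewrite le_max lexx.
set eta := eps / 4 * expR (- Lam).
have eta0 : 0 < eta by rewrite mulr_gt0 ?expR_gt0 //; lra.
have [m hm] := @series_small R C1 Lam eta C11 Lam1 eta0.
set A := 2 ^+ m.+1 * Lam.
have A0 : 0 < A by rewrite mulr_gt0 ?exprn_gt0 //; lra.
have lne : 0 < ln (1 + eps / 4) by apply: ln_gt0; lra.
exists (Num.min (1/2) (ln (1 + eps / 4) / A)); split.
  by rewrite lt_min; apply/andP; split; [lra | exact: divr_gt0].
move=> dl t dl0 dlm t0 t1.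
move: dlm; rewrite lt_min => /andP[dl1 dlA].
have dlA' : dl * A <= ln (1 + eps / 4).
  by move: dlA; rewrite ltr_pdivlMr // => /ltW.
have edl : expR (dl * A) <= 1 + eps / 4.
  by rewrite -[X in _ <= X]lnK ?posrE ?ler_expR //; lra.
set sig := sublevel_measure mu V.
have Lt : lam0 <= Lam / t.
  apply: (le_trans lamL); rewrite ler_pdivlMr //; nra.
have sp : (0 < sig (Lam / t)%R)%E.
  exact: (@sigma_pos _ _ _ mu V C1 lam0 V_meas mu_pos l0 C10 hd1 (Lam / t) Lt).
have sf : forall lam, (sig lam < +oo)%E.
  by move=> lam; apply: (@sigma_fin _ _ _ mu dist p0 V ball_meas ball_fin V_meas V_esslim).
set s := fine (sig (Lam / t)%R).
have ss : sig (Lam / t)%R = s%:E by rewrite fineK // gt0_fin_numE.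
have s0 : 0 < s by rewrite -lte_fin -ss.
pose S n := [set x | V x <= 2 ^+ n.+1 * A / t].
pose c n := expR (- (2 ^+ n * A / 2)).
pose f n x := ((c n)%:E * (\1_(S n) x)%:E)%E.
have f0 : forall n x, (0 <= f n x)%E.
  by move=> n x; rewrite /f -EFinM lee_fin mulr_ge0 ?expR_ge0 // indicE ler0n.
have mf : forall n, measurable_fun setT (f n).
  move=> n; apply: measurable_funeM; apply/measurable_EFinP.
  by apply: measurable_indic; exact: mV.
have If : forall n, (\int[mu]_x f n x = (c n)%:E * sig (2 ^+ n.+1 * A / t)%R)%E.
  move=> n; rewrite ge0_integralZl_EFin //; last by rewrite expR_ge0.
  - by rewrite integral_indic // ?setIT //; exact: mV.
  - by apply/measurable_EFinP; apply: measurable_indic; exact: mV.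
have Sser : (\sum_(n <oo) (\int[mu]_x f n x) <= (eta * s)%:E)%E.
  have := (@epsilon_trick0 R (eta * s) xpredT (ltW (mulr_gt0 eta0 s0))).
  move=> H; apply: (@le_trans _ _ (\sum_(i <oo) ((eta * s) / (2 ^ i.+1)%:R)%:E)%E); last exact: H.
  apply: (@lee_nneseries R _ _ xpredT 0) => [n _ _|n _]; first by apply: integral_ge0 => x _.
  rewrite If.
  have e1 : 2 ^+ n.+1 * A / t = 2 ^+ (n + m).+2 * (Lam / t).
    rewrite /A (_ : (n + m).+2 = (n.+1 + m.+1)%N); last by rewrite addnS addSn.
    by rewrite exprD !mulrA.
  have c1 : c n = expR (- (2 ^+ (n + m) * Lam)).
    rewrite /c /A exprS exprD; congr (expR (- _)).
    by field.
  rewrite e1.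
  have h := @dbl_iter _ _ _ mu V C1 lam0 l0 C10 hd1 (n + m).+2 (Lam / t) Lt.
  have cn0 : (0 <= (c n)%:E)%E by rewrite lee_fin expR_ge0.
  apply: (le_trans (lee_wpmul2l cn0 h)).
  rewrite -/sig ss -!EFinM lee_fin mulrA c1 [eta * s / _]mulrAC.
  by apply: ler_wpM2r; [exact: ltW | exact: hm].
have mS0 : forall lam, measurable_fun setT (fun x : T => ((\1_[set y | V y <= lam] x)%:E : \bar R)).
  by move=> lam; apply/measurable_EFinP; apply: measurable_indic; exact: mV.
have mser : measurable_fun setT (fun x => (\sum_(n <oo) f n x)%E).
  exact: (@ge0_emeasurable_sum _ _ _ setT f xpredT (fun k x _ _ => f0 k x) (fun k _ => mf k)).
have hu : forall x n, (V x <= 2 ^+ n.+1 * A / t)%R ->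
    ((expR (- (2 ^+ n * A / 2)))%:E <= f n x)%E.
  by move=> x n hn; rewrite /f indicE mem_set //= mule1.
have Z1le : (partition_fn mu V t <= sig (A / t)%R + (eta * s)%:E)%E.
  rewrite /partition_fn.
  apply: (@le_trans _ _ (\int[mu]_x ((\1_[set y | V y <= A / t] x)%:E + \sum_(n <oo) f n x))%E).
    apply: ae_ge0_le_integral => //.
    - exact: mexp.
    - by move=> x _; apply: adde_ge0; [rewrite lee_fin indicE ler0n | exact: nneseries_ge0].
    - by apply: emeasurable_funD.
    - apply: filterS V_ge1 => x Vx _.
      apply: (@pt_Z1 R t (V x) A) => //.
      + by move=> h; rewrite indicE mem_set.
      + by move=> n; exact: hu.
  rewrite ge0_integralD //.
  - rewrite integral_indic // ?setIT; last exact: mV.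
    by rewrite integral_nneseries // leeD2l.
  - by move=> x _; exact: nneseries_ge0.
have Z1ge : ((expR (- Lam) * s)%:E <= partition_fn mu V t)%E.
  rewrite EFinM -ss /partition_fn.
  have -> : ((expR (- Lam))%:E * sig (Lam / t)%R =
      \int[mu]_x ((expR (- Lam))%:E * (\1_[set y | V y <= Lam / t] x)%:E))%E.
    rewrite ge0_integralZl_EFin ?expR_ge0 //.
    by rewrite integral_indic // ?setIT //; exact: mV.
  apply: ge0_le_integral => //.
  - by apply: measurable_funeM.
  - exact: mexp.
  - move=> x _; rewrite -EFinM lee_fin indicE.
    case: (boolP (x \in [set y | V y <= Lam / t])) => h.
      rewrite mulr1 ler_expR lerN2.
      by move: h; rewrite inE /= ler_pdivlMr // mulrC.
    by rewrite mulr0 expR_ge0.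
have Z12 : (partition_fn mu V t <= partition_fn mu V (t * (1 - dl)))%E.
  apply: ae_ge0_le_integral => //.
  - exact: mexp.
  - exact: mexp.
  - apply: filterS V_ge1 => x Vx _.
    rewrite lee_fin ler_expR lerN2.
    have h : 0 <= (t * dl) * V x by rewrite mulr_ge0 // ?mulr_ge0 //; lra.
    lra.
have Z2le : (partition_fn mu V (t * (1 - dl)) <=
    (expR (dl * A))%:E * partition_fn mu V t + (eta * s)%:E)%E.
  rewrite /partition_fn.
  apply: (@le_trans _ _ (\int[mu]_x ((expR (dl * A))%:E * (expR (- (t * V x)))%:E
       + \sum_(n <oo) f n x))%E).
    apply: ge0_le_integral => //.
    - exact: mexp.
    - apply: emeasurable_funD => //; apply: measurable_funeM; exact: mexp.
    - move=> x _; apply: (@pt_Z2 R t (V x) dl A) => //.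
      + lra.
      + lra.
      + by move=> n; exact: hu.
  have g10 : forall x, setT x -> (0 <= (expR (dl * A))%:E * (expR (- (t * V x)))%:E)%E.
    by move=> x _; rewrite -EFinM lee_fin mulr_ge0 ?expR_ge0.
  have mg1 : measurable_fun setT (fun x => ((expR (dl * A))%:E * (expR (- (t * V x)))%:E)%E).
    apply: measurable_funeM; exact: mexp.
  have g20 : forall x, setT x -> (0 <= \sum_(n <oo) f n x)%E.
    by move=> x _; exact: nneseries_ge0.
  rewrite (@ge0_integralD _ _ _ mu setT measurableT _ _ g10 mg1 g20 mser).
  rewrite ge0_integralZl_EFin ?expR_ge0 //; last exact: mexp.
  by rewrite integral_nneseries // leeD2l.
have es0 : 0 < expR (- Lam) * s by rewrite mulr_gt0 ?expR_gt0.
have Z1f : partition_fn mu V t \is a fin_num.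
  rewrite ge0_fin_numE; last first.
    by apply: le_trans Z1ge; rewrite lee_fin ltW.
  apply: (le_lt_trans Z1le); apply: lte_add_pinfty => //; exact: ltry.
have Z2f : partition_fn mu V (t * (1 - dl)) \is a fin_num.
  rewrite ge0_fin_numE; last first.
    by apply: le_trans Z12; apply: le_trans Z1ge; rewrite lee_fin ltW.
  apply: (le_lt_trans Z2le).
  by rewrite -(fineK Z1f) -EFinM -EFinD; exact: ltry.
move: Z1ge Z12 Z2le.
rewrite -(fineK Z1f) -(fineK Z2f) -EFinM -EFinD !lee_fin.
set z1 := fine (partition_fn mu V t).
set z2 := fine (partition_fn mu V (t * (1 - dl))).
move=> h1 h2 h3.
have z10 : 0 < z1 by lra.
have z20 : 0 < z2 by lra.
have es : eta * s <= eps / 4 * z1.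
  have -> : eta * s = eps / 4 * (expR (- Lam) * s) by rewrite /eta; ring.
  by rewrite ler_wpM2l //; lra.
have ez : expR (dl * A) * z1 <= (1 + eps / 4) * z1 by rewrite ler_wpM2r //; lra.
have hz : 0 <= eps * (z2 - z1) by rewrite mulr_ge0 //; lra.
have q1 : (1 - eps) * z2 < z1 by nra.
have q2 : z1 / z2 <= 1 by rewrite ler_pdivrMr // mul1r.
have q3 : 1 - eps < z1 / z2 by rewrite ltr_pdivlMr.
have -> : fine z1%:E = z1 by [].
have -> : fine z2%:E = z2 by [].
rewrite ltr_norml; apply/andP; split; lra.
Qed.
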